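(* Let $\alpha,\beta>0$, $f$ as in the context, and $\zeta,\xi:\mathbb{R}_+\to\mathbb{R}$ continuous. Let $(\underline{\mathbf{W}},\underline{\mathbf{Q}})$ and $(\overline{\mathbf{W}},\overline{\mathbf{Q}})$, with all components in $\mathscr{C}^1([0,+\infty),\mathbb{R})$, be respectively a subsolution and a supersolution of the asymptotic system for $t>0$ and integers $j\in[\zeta(t),\xi(t)]$, i.e. for such $t,j$: $$\overline{W}_j'\ge-2\alpha\overline{W}_j+\beta(\overline{Q}_j+\overline{Q}_{j+1}),\quad \overline{Q}_j'\ge f(\overline{Q}_j)+\alpha(\overline{W}_j+\overline{W}_{j-1})-2\beta\overline{Q}_j,$$ and the same with all inequalities reversed for $(\underline{\mathbf{W}},\underline{\mathbf{Q}})$. Assume $\underline{W}_j(0)\le\overline{W}_j(0)$ and $\underline{Q}_j(0)\le\overline{Q}_j(0)$ for all integers $\zeta(0)-1\le j\le\xi(0)+1$, and $\underline{W}_j(t)\le\overline{W}_j(t)$, $\underline{Q}_j(t)\le\overline{Q}_j(t)$ for all $t>0$ and integers $j\in[\zeta(t)-1,\zeta(t))\cup(\xi(t),\xi(t)+1]$. Then $\underline{W}_j(t)\le\overline{W}_j(t)$ and $\underline{Q}_j(t)\le\overline{Q}_j(t)$ for all $t>0$ and integers $\zeta(t)\le j\le\xi(t)$.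
   Context: $f\in\mathscr{C}^1([0,1])$ satisfies $f(0)=f(1)=0$ and $0<f(u)\le f'(0)u$ for $u\in(0,1)$, extended to a locally Lipschitz function on $\mathbb{R}$ negative on $\mathbb{R}\setminus[0,1]$. *)

(* Defs.v *)
From Stdlib Require Import Reals ZArith Lra.
From Coquelicot Require Import Coquelicot.
Open Scope R_scope.

(* u is C^1 on the closed set S (one-sided difference quotients at
   boundary points): there is u' continuous on S (within S) such that the
   difference quotient of u at every t in S, taken along S, tends to u' t. *)
Definition C1_on (S : R -> Prop) (u : R -> R) : Prop :=
  exists u' : R -> R,
    (forall t, S t ->
       filterlim (fun s => (u s - u t) / (s - t))
         (within (fun s => S s /\ s <> t) (locally t)) (locally (u' t))) /\
    (forall t, S t -> filterlim u' (within S (locally t)) (locally (u' t))).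

Definition nonneg_half (t : R) : Prop := 0 <= t.
Definition unit_interval (t : R) : Prop := 0 <= t <= 1.

Definition cont_nonneg (u : R -> R) : Prop :=
  forall t, 0 <= t -> filterlim u (within nonneg_half (locally t)) (locally (u t)).

Definition locally_lipschitz (f : R -> R) : Prop :=
  forall a b : R, exists L : R, forall x y : R,
    a <= x <= b -> a <= y <= b -> Rabs (f x - f y) <= L * Rabs (x - y).

Definition right_deriv0 (f : R -> R) (d : R) : Prop :=
  filterlim (fun s => (f s - f 0) / s) (at_right 0) (locally d).

Definition KPP_f (f : R -> R) : Prop :=
  C1_on unit_interval f /\ f 0 = 0 /\ f 1 = 0 /\
  (exists fp0 : R, right_deriv0 f fp0 /\
     forall u, 0 < u < 1 -> 0 < f u /\ f u <= fp0 * u) /\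
  locally_lipschitz f /\
  (forall u, (u < 0 \/ 1 < u) -> f u < 0).

(* Main.v *)
Require Import Defs.
From Stdlib Require Import Reals ZArith Lra Lia Classical.
From Coquelicot Require Import Coquelicot.
Open Scope R_scope.

Lemma ball_R (x e y : R) : ball x e y <-> Rabs (y - x) < e.
Proof. reflexivity. Qed.

Lemma within_eps (S : R -> Prop) g t l :
  filterlim g (within S (locally t)) (locally l) ->
  forall eta, 0 < eta -> exists d, 0 < d /\
    forall s, Rabs (s - t) < d -> S s -> Rabs (g s - l) < eta.
Proof.
  intros H eta He.
  destruct (proj1 (filterlim_locally g l) H (mkposreal eta He)) as [d Hd].
  exists d; split; [apply cond_pos|].
  intros s Hs HS. apply (Hd s Hs HS).
Qed.

Lemma cont_eps g t : continuous g t ->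
  forall eta, 0 < eta -> exists d, 0 < d /\
    forall s, Rabs (s - t) < d -> Rabs (g s - g t) < eta.
Proof.
  intros H eta He.
  destruct (proj1 (filterlim_locally g (g t)) H (mkposreal eta He)) as [d Hd].
  exists d; split; [apply cond_pos|].
  intros s Hs. apply (Hd s Hs).
Qed.

Definition cont_at (u : R -> R) (t : R) : Prop :=
  forall eta, 0 < eta -> exists d, 0 < d /\
    forall s, 0 <= s -> Rabs (s - t) < d -> Rabs (u s - u t) < eta.

Lemma cont_nonneg_at u : cont_nonneg u -> forall t, 0 <= t -> cont_at u t.
Proof.
  intros H t Ht eta He.
  destruct (within_eps _ _ _ _ (H t Ht) eta He) as [d [Hd H1]].
  exists d; split; auto.
Qed.

Lemma C1_props u : C1_on nonneg_half u ->
  (forall t, 0 <= t -> cont_at u t) /\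
  (forall t, 0 < t -> is_derive u t (Derive u t)).
Proof.
  intros [u' [Hq _]]. split.
  - intros t Ht eta He.
    destruct (within_eps _ _ _ _ (Hq t Ht) 1 Rlt_0_1) as [d0 [Hd0 H0]].
    set (c := Rabs (u' t) + 1).
    assert (Hc : 0 < c) by (unfold c; pose proof (Rabs_pos (u' t)); lra).
    exists (Rmin d0 (eta / c)). split.
    { apply Rmin_pos; auto. apply Rdiv_lt_0_compat; auto. }
    intros s Hs Hst.
    destruct (Req_dec s t) as [->|Hne].
    { replace (u t - u t) with 0 by ring. rewrite Rabs_R0. auto. }
    assert (Hq1 := H0 s (Rlt_le_trans _ _ _ Hst (Rmin_l _ _)) (conj Hs Hne)).
    assert (Hst2 : Rabs (s - t) < eta / c) by (eapply Rlt_le_trans; [apply Hst| apply Rmin_r]).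
    assert (Hsn : s - t <> 0) by lra.
    replace (u s - u t) with ((u s - u t) / (s - t) * (s - t)) by (field; auto).
    rewrite Rabs_mult.
    assert (Rabs ((u s - u t) / (s - t)) <= c).
    { unfold c. pose proof (Rabs_triang_inv ((u s - u t) / (s - t)) (u' t)). lra. }
    apply Rle_lt_trans with (c * Rabs (s - t)).
    { apply Rmult_le_compat_r; auto. apply Rabs_pos. }
    apply Rmult_lt_reg_r with (/ c). { apply Rinv_0_lt_compat; auto. }
    replace (c * Rabs (s - t) * / c) with (Rabs (s - t)) by (field; lra).
    exact Hst2.
  - intros t Ht.
    assert (Hd : is_derive u t (u' t)).
    { apply is_derive_Reals. intros eps He.
      assert (Ht' : 0 <= t) by lra.
      destruct (within_eps _ _ _ _ (Hq t Ht') eps He) as [d [Hd H0]].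
      assert (Hm : 0 < Rmin d t) by (apply Rmin_pos; auto).
      exists (mkposreal _ Hm). intros h Hh Hlt. simpl in Hlt.
      assert (Hs := H0 (t + h)).
      replace (t + h - t) with h in Hs by ring.
      apply Hs.
      - eapply Rlt_le_trans; [apply Hlt | apply Rmin_l].
      - split; [|lra]. unfold nonneg_half.
        assert (Rabs h < t) by (eapply Rlt_le_trans; [apply Hlt | apply Rmin_r]).
        apply Rabs_def2 in H. lra. }
    rewrite (is_derive_unique _ _ _ Hd). exact Hd.
Qed.

Lemma bound_on u T : 0 <= T -> (forall t, 0 <= t <= T -> cont_at u t) ->
  exists M, forall t, 0 <= t <= T -> Rabs (u t) <= M.
Proof.
  intros HT Hc.
  set (h := fun s => Rabs (u (Rmax 0 s))).
  destruct (continuity_ab_maj h 0 T HT) as [Mx [HM _]].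
  { intros c Hc0. unfold continuity_pt, continue_in, limit1_in, limit_in.
    intros eps He. destruct (Hc c Hc0 eps He) as [d [Hd H1]].
    exists d. split; auto. intros x [_ Hx]. simpl in *. unfold R_dist in *.
    unfold h. rewrite (Rmax_right 0 c) by lra.
    eapply Rle_lt_trans. apply Rabs_triang_inv2.
    apply H1. apply Rmax_l.
    unfold Rmax. destruct (Rle_dec 0 x).
    - auto.
    - apply Rabs_def2 in Hx. rewrite Rabs_left1 by lra. lra. }
  exists (h Mx). intros t Ht. specialize (HM t Ht). unfold h in HM.
  rewrite Rmax_right in HM by lra. auto.
Qed.

Lemma sign_deriv (g : R -> R) (t l d : R) : is_derive g t l -> 0 < d ->
  (forall s, t - d < s < t -> g s > 0) -> g t = 0 -> l <= 0.
Proof.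
  intros Hd Hd0 Hpos Hg. apply Rnot_lt_le. intro Hl.
  apply is_derive_Reals in Hd. destruct (Hd l Hl) as [dl Hdl].
  set (h := - (Rmin d dl) / 2).
  assert (Hm : 0 < Rmin d dl) by (apply Rmin_pos; auto; apply cond_pos).
  assert (Hh : h < 0) by (unfold h; lra).
  assert (Habs : Rabs h < dl).
  { rewrite Rabs_left by lra. unfold h. pose proof (Rmin_r d dl). lra. }
  specialize (Hdl h ltac:(lra) Habs).
  assert (Hp : g (t + h) > 0).
  { apply Hpos. unfold h. pose proof (Rmin_l d dl). lra. }
  rewrite Hg in Hdl. apply Rabs_def2 in Hdl.
  assert ((g (t + h) - 0) / h < 0).
  { unfold Rdiv. replace (g (t + h) - 0) with (g (t+h)) by ring.
    apply Rmult_pos_neg; auto. apply Rinv_lt_0_compat; auto. }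
  lra.
Qed.

Lemma finite_max (P : Z -> R -> Prop) (a : Z) (n : nat) :
  (forall j m m', m <= m' -> P j m -> P j m') ->
  (forall j, (a <= j <= a + Z.of_nat n)%Z -> exists m, P j m) ->
  exists m, forall j, (a <= j <= a + Z.of_nat n)%Z -> P j m.
Proof.
  intros Hmono. induction n as [|n IH]; intros H.
  - destruct (H a ltac:(lia)) as [m Hm]. exists m. intros j Hj.
    replace j with a by lia. auto.
  - destruct IH as [m1 Hm1].
    { intros j Hj. apply H. lia. }
    destruct (H (a + Z.of_nat (S n))%Z ltac:(lia)) as [m2 Hm2].
    exists (Rmax m1 m2). intros j Hj.
    destruct (Z.eq_dec j (a + Z.of_nat (S n))%Z) as [->|Hne].
    + eapply Hmono; [apply Rmax_r|auto].
    + eapply Hmono; [apply Rmax_l|]. apply Hm1. lia.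
Qed.

Lemma finite_min (P : Z -> R -> Prop) (a : Z) (n : nat) :
  (forall j d d', 0 < d' <= d -> P j d -> P j d') ->
  (forall j, (a <= j <= a + Z.of_nat n)%Z -> exists d, 0 < d /\ P j d) ->
  exists d, 0 < d /\ forall j, (a <= j <= a + Z.of_nat n)%Z -> P j d.
Proof.
  intros Hmono. induction n as [|n IH]; intros H.
  - destruct (H a ltac:(lia)) as [m [Hm0 Hm]]. exists m. split; auto. intros j Hj.
    replace j with a by lia. auto.
  - destruct IH as [m1 [Hm10 Hm1]].
    { intros j Hj. apply H. lia. }
    destruct (H (a + Z.of_nat (S n))%Z ltac:(lia)) as [m2 [Hm20 Hm2]].
    exists (Rmin m1 m2). split. { apply Rmin_pos; auto. } intros j Hj.
    assert (0 < Rmin m1 m2) by (apply Rmin_pos; auto).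
    destruct (Z.eq_dec j (a + Z.of_nat (S n))%Z) as [->|Hne].
    + eapply Hmono; [split; [auto|apply Rmin_r]|auto].
    + eapply Hmono; [split; [auto|apply Rmin_l]|]. apply Hm1. lia.
Qed.

Lemma cont_comb (u v : R -> R) eps Lam t : cont_at u t -> cont_at v t ->
  cont_at (fun s => u s - v s + eps * exp (Lam * s)) t.
Proof.
  intros Hu Hv eta He.
  assert (Hc : continuous (fun s => eps * exp (Lam * s)) t).
  { apply (ex_derive_continuous (K:=R_AbsRing) (V:=R_NormedModule)). auto_derive. auto. }
  destruct (cont_eps _ _ Hc (eta/3)) as [d3 [Hd3 H3]]; [lra|].
  destruct (Hu (eta/3)) as [d1 [Hd1 H1]]; [lra|].
  destruct (Hv (eta/3)) as [d2 [Hd2 H2]]; [lra|].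
  exists (Rmin d1 (Rmin d2 d3)). split.
  { repeat apply Rmin_pos; auto. }
  intros s Hs Hst.
  pose proof (Rmin_l d1 (Rmin d2 d3)). pose proof (Rmin_r d1 (Rmin d2 d3)).
  pose proof (Rmin_l d2 d3). pose proof (Rmin_r d2 d3).
  specialize (H1 s Hs ltac:(lra)). specialize (H2 s Hs ltac:(lra)). specialize (H3 s ltac:(lra)).
  apply Rabs_def2 in H1. apply Rabs_def2 in H2. apply Rabs_def2 in H3.
  apply Rabs_def1; lra.
Qed.

Lemma deriv_comb (u v : R -> R) eps Lam t du dv :
  is_derive u t du -> is_derive v t dv ->
  is_derive (fun s => u s - v s + eps * exp (Lam * s)) t
    (du - dv + eps * (Lam * exp (Lam * t))).
Proof.
  intros Hu Hv.
  assert (H3: is_derive (fun s => eps*exp(Lam*s)) t (eps*(Lam*exp(Lam*t)))).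
  { auto_derive; [auto| ring]. }
  exact (is_derive_plus _ _ _ _ _ (is_derive_minus _ _ _ _ _ Hu Hv) H3).
Qed.

Lemma left_nonneg (g : R -> R) s d : cont_at g s -> 0 < s -> 0 < d ->
  (forall t, s - d < t < s -> g t > 0) -> g s >= 0.
Proof.
  intros Hc Hs Hd Hp. apply Rnot_lt_ge. intro Hn.
  destruct (Hc (- g s)) as [d' [Hd' H']]; [lra|].
  set (m := Rmin (Rmin d d') s).
  assert (0 < m) by (unfold m; repeat apply Rmin_pos; auto).
  pose proof (Rmin_l (Rmin d d') s). pose proof (Rmin_r (Rmin d d') s).
  pose proof (Rmin_l d d'). pose proof (Rmin_r d d').
  assert (Ht : s - d < s - m / 2 < s) by (unfold m in *; lra).
  specialize (Hp _ Ht).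
  assert (Habs : Rabs (s - m / 2 - s) < d').
  { replace (s - m/2 - s) with (-(m/2)) by ring. rewrite Rabs_Ropp, Rabs_right; unfold m in *; lra. }
  specialize (H' (s - m/2) ltac:(unfold m in *; lra) Habs).
  apply Rabs_def2 in H'. lra.
Qed.

Lemma abs_le_inv x b : Rabs x <= b -> - b <= x <= b.
Proof. intros H. pose proof (Rle_abs x). pose proof (Rle_abs (-x)). rewrite Rabs_Ropp in *. lra. Qed.

Lemma abs_lt_inv x b : Rabs x < b -> - b < x < b.
Proof. intros H. pose proof (Rle_abs x). pose proof (Rle_abs (-x)). rewrite Rabs_Ropp in *. lra. Qed.

Theorem propositionB7
  (alpha beta : R) (f : R -> R) (zeta xi : R -> R)
  (Wl Ql Wu Qu : Z -> R -> R) :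
  0 < alpha -> 0 < beta -> KPP_f f ->
  cont_nonneg zeta -> cont_nonneg xi ->
  (forall j, C1_on nonneg_half (Wl j)) -> (forall j, C1_on nonneg_half (Ql j)) ->
  (forall j, C1_on nonneg_half (Wu j)) -> (forall j, C1_on nonneg_half (Qu j)) ->
  (* supersolution *)
  (forall t (j : Z), 0 < t -> zeta t <= IZR j <= xi t ->
     Derive (Wu j) t >= - 2 * alpha * Wu j t + beta * (Qu j t + Qu (j + 1)%Z t) /\
     Derive (Qu j) t >= f (Qu j t) + alpha * (Wu j t + Wu (j - 1)%Z t)
                         - 2 * beta * Qu j t) ->
  (* subsolution *)
  (forall t (j : Z), 0 < t -> zeta t <= IZR j <= xi t ->
     Derive (Wl j) t <= - 2 * alpha * Wl j t + beta * (Ql j t + Ql (j + 1)%Z t) /\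
     Derive (Ql j) t <= f (Ql j t) + alpha * (Wl j t + Wl (j - 1)%Z t)
                         - 2 * beta * Ql j t) ->
  (* initial ordering *)
  (forall j : Z, zeta 0 - 1 <= IZR j <= xi 0 + 1 ->
     Wl j 0 <= Wu j 0 /\ Ql j 0 <= Qu j 0) ->
  (* boundary ordering *)
  (forall t (j : Z), 0 < t ->
     (zeta t - 1 <= IZR j < zeta t \/ xi t < IZR j <= xi t + 1) ->
     Wl j t <= Wu j t /\ Ql j t <= Qu j t) ->
  forall t (j : Z), 0 < t -> zeta t <= IZR j <= xi t ->
    Wl j t <= Wu j t /\ Ql j t <= Qu j t.
Proof.
  intros Ha Hb Hf Hz Hx HWl HQl HWu HQu Hsup Hsub Hinit Hbd t0 j0 Ht0 Hj0.
  assert (CWl : forall j t, 0 <= t -> cont_at (Wl j) t) by (intros; apply (proj1 (C1_props _ (HWl j))); auto).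
  assert (CWu : forall j t, 0 <= t -> cont_at (Wu j) t) by (intros; apply (proj1 (C1_props _ (HWu j))); auto).
  assert (CQl : forall j t, 0 <= t -> cont_at (Ql j) t) by (intros; apply (proj1 (C1_props _ (HQl j))); auto).
  assert (CQu : forall j t, 0 <= t -> cont_at (Qu j) t) by (intros; apply (proj1 (C1_props _ (HQu j))); auto).
  assert (DWl : forall j t, 0 < t -> is_derive (Wl j) t (Derive (Wl j) t)) by (intros; apply (proj2 (C1_props _ (HWl j))); auto).
  assert (DWu : forall j t, 0 < t -> is_derive (Wu j) t (Derive (Wu j) t)) by (intros; apply (proj2 (C1_props _ (HWu j))); auto).
  assert (DQl : forall j t, 0 < t -> is_derive (Ql j) t (Derive (Ql j) t)) by (intros; apply (proj2 (C1_props _ (HQl j))); auto).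
  assert (DQu : forall j t, 0 < t -> is_derive (Qu j) t (Derive (Qu j) t)) by (intros; apply (proj2 (C1_props _ (HQu j))); auto).
  assert (Cz := cont_nonneg_at _ Hz). assert (Cx := cont_nonneg_at _ Hx).
  destruct (bound_on zeta t0) as [Mz HMz]; [lra| intros; apply Cz; lra|].
  destruct (bound_on xi t0) as [Mx HMx]; [lra| intros; apply Cx; lra|].
  set (N := Z.abs (up (Rabs Mz + Rabs Mx + 2))).
  assert (HN0 : IZR N > Rabs Mz + Rabs Mx + 2).
  { destruct (archimed (Rabs Mz + Rabs Mx + 2)) as [H1 _].
    unfold N. apply Rlt_le_trans with (1 := H1). apply IZR_le. lia. }
  assert (HN : forall t j, 0 <= t <= t0 -> zeta t - 1 <= IZR j <= xi t + 1 ->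
            (- N <= j <= - N + Z.of_nat (Z.to_nat (2 * N)))%Z).
  { intros t j Ht Hj. pose proof (abs_le_inv _ _ (HMz t Ht)). pose proof (abs_le_inv _ _ (HMx t Ht)).
    pose proof (Rle_abs Mz). pose proof (Rle_abs Mx).
    assert (IZR (- N) < IZR j) by (rewrite opp_IZR; lra).
    assert (IZR j < IZR N) by lra.
    apply lt_IZR in H3. apply lt_IZR in H4. lia. }
  destruct (finite_max (fun j m => forall t, 0 <= t <= t0 -> Rabs (Qu j t) <= m /\ Rabs (Ql j t) <= m)
              (- N) (Z.to_nat (2 * N))) as [M HM].
  { intros j m m' Hm H t Ht. destruct (H t Ht). split; lra. }
  { intros j _. destruct (bound_on (Qu j) t0) as [M1 HM1]; [lra| intros; apply CQu; lra|].
    destruct (bound_on (Ql j) t0) as [M2 HM2]; [lra| intros; apply CQl; lra|].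
    exists (Rmax M1 M2). intros t Ht. split.
    - eapply Rle_trans; [apply HM1; auto| apply Rmax_l].
    - eapply Rle_trans; [apply HM2; auto| apply Rmax_r]. }
  destruct Hf as [_ [_ [_ [_ [Hlip _]]]]].
  destruct (Hlip (- M) M) as [L HL].
  set (Lam := Rabs L + 2 * alpha + 2 * beta + 1).
  assert (Key : forall eps, 0 < eps ->
    Wu j0 t0 - Wl j0 t0 + eps * exp (Lam * t0) > 0 /\
    Qu j0 t0 - Ql j0 t0 + eps * exp (Lam * t0) > 0).
  2:{ assert (HE : 0 < exp (Lam * t0)) by apply exp_pos.
      split; apply Rnot_lt_le; intro Hn.
      - destruct (Key ((Wl j0 t0 - Wu j0 t0) / (2 * exp (Lam * t0)))) as [K _].
        { apply Rdiv_lt_0_compat; lra. }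
        replace ((Wl j0 t0 - Wu j0 t0) / (2 * exp (Lam * t0)) * exp (Lam * t0))
          with ((Wl j0 t0 - Wu j0 t0) / 2) in K by (field; lra). lra.
      - destruct (Key ((Ql j0 t0 - Qu j0 t0) / (2 * exp (Lam * t0)))) as [_ K].
        { apply Rdiv_lt_0_compat; lra. }
        replace ((Ql j0 t0 - Qu j0 t0) / (2 * exp (Lam * t0)) * exp (Lam * t0))
          with ((Ql j0 t0 - Qu j0 t0) / 2) in K by (field; lra). lra. }
  intros eps He.
  assert (Eexp : forall t, eps * exp (Lam * t) > 0).
  { intros. apply Rmult_lt_0_compat; auto. apply exp_pos. }
  set (DW := fun j t => Wu j t - Wl j t + eps * exp (Lam * t)).
  set (DQ := fun j t => Qu j t - Ql j t + eps * exp (Lam * t)).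
  assert (CDW : forall j t, 0 <= t -> cont_at (DW j) t).
  { intros. apply cont_comb; auto. }
  assert (CDQ : forall j t, 0 <= t -> cont_at (DQ j) t).
  { intros. apply cont_comb; auto. }
  assert (Ord : forall j t, Wl j t <= Wu j t /\ Ql j t <= Qu j t -> DW j t > 0 /\ DQ j t > 0).
  { intros j t [H1 H2]. unfold DW, DQ. specialize (Eexp t). split; lra. }
  set (Good := fun t => forall j, zeta t <= IZR j <= xi t -> DW j t > 0 /\ DQ j t > 0).
  set (A := fun s => 0 <= s <= t0 /\ forall t, 0 < t <= s -> Good t).
  destruct (completeness A) as [s [Hub Hlub]].
  { exists t0. intros x [Hx0 _]. lra. }
  { exists 0. split; [lra|]. intros; lra. }
  assert (s0 : 0 <= s). { apply Hub. split; [lra|]. intros; lra. }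
  assert (st0 : s <= t0). { apply Hlub. intros x [Hx0 _]. lra. }
  assert (F1 : forall t, 0 < t < s -> Good t).
  { intros t Ht. destruct (classic (exists s', A s' /\ t <= s')) as [[s' [[_ HA] Hts]]|Hn].
    - apply HA; lra.
    - exfalso. assert (s <= t); [|lra]. apply Hlub. intros x Ax.
      destruct (Rle_lt_dec x t); auto. exfalso; apply Hn; exists x; split; auto; lra. }
  assert (F2 : forall j, zeta s - 1 <= IZR j <= xi s + 1 -> DW j s > 0 /\ DQ j s > 0).
  { destruct (Req_dec s 0) as [Hs0|Hs0].
    - subst s. intros j Hj. apply Ord. apply Hinit. auto.
    - assert (spos : 0 < s) by lra.
      assert (Bd : forall j, zeta s - 1 <= IZR j < zeta s \/ xi s < IZR j <= xi s + 1 ->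
                DW j s > 0 /\ DQ j s > 0).
      { intros j Hj. apply Ord. apply Hbd; auto. }
      assert (Left : forall j, zeta s <= IZR j <= xi s -> exists d, 0 < d /\
                 forall t, s - d < t < s -> DW j t > 0 /\ DQ j t > 0).
      { intros j Hj. destruct (Cz s s0 1 Rlt_0_1) as [d1 [Hd1 Hz1]].
        destruct (Cx s s0 1 Rlt_0_1) as [d2 [Hd2 Hx1]].
        exists (Rmin (Rmin d1 d2) s). split. { repeat apply Rmin_pos; auto. }
        intros t Ht.
        pose proof (Rmin_l (Rmin d1 d2) s). pose proof (Rmin_r (Rmin d1 d2) s).
        pose proof (Rmin_l d1 d2). pose proof (Rmin_r d1 d2).
        assert (Hts : Rabs (t - s) < Rmin d1 d2).
        { rewrite Rabs_left by lra. lra. }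
        specialize (Hz1 t ltac:(lra) ltac:(lra)). specialize (Hx1 t ltac:(lra) ltac:(lra)).
        apply abs_lt_inv in Hz1. apply abs_lt_inv in Hx1.
        destruct (Rle_dec (zeta t) (IZR j)); destruct (Rle_dec (IZR j) (xi t)).
        - apply F1; [lra|]. split; auto.
        - apply Ord. apply Hbd; [lra|]. right. lra.
        - apply Ord. apply Hbd; [lra|]. left. lra.
        - apply Ord. apply Hbd; [lra|]. right. lra. }
      assert (Nonneg : forall j, zeta s <= IZR j <= xi s -> DW j s >= 0 /\ DQ j s >= 0).
      { intros j Hj. destruct (Left j Hj) as [d [Hd Hl]]. split.
        - apply (left_nonneg (DW j) s d); auto. intros t Ht. apply Hl; auto.
        - apply (left_nonneg (DQ j) s d); auto. intros t Ht. apply Hl; auto. }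
      assert (Nb : forall j, zeta s - 1 <= IZR j <= xi s + 1 -> DW j s >= 0 /\ DQ j s >= 0).
      { intros j Hj. destruct (Rlt_dec (IZR j) (zeta s)).
        - destruct (Bd j ltac:(lra)). split; lra.
        - destruct (Rlt_dec (xi s) (IZR j)).
          + destruct (Bd j ltac:(lra)). split; lra.
          + apply Nonneg. lra. }
      intros j Hj. destruct (Rlt_dec (IZR j) (zeta s)).
      { apply Bd; lra. }
      destruct (Rlt_dec (xi s) (IZR j)).
      { apply Bd; lra. }
      assert (Hj' : zeta s <= IZR j <= xi s) by lra.
      destruct (Nonneg j Hj') as [NW NQ].
      destruct (Left j Hj') as [d [Hd Hl]].
      set (E := eps * exp (Lam * s)).
      assert (HE : E > 0) by apply Eexp.
      destruct (Hsup s j spos Hj') as [Su1 Su2].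
      destruct (Hsub s j spos Hj') as [Sl1 Sl2].
      split.
      + destruct (Req_dec (DW j s) 0) as [Z0|NZ]; [|lra].
        exfalso.
        pose proof (deriv_comb (Wu j) (Wl j) eps Lam s _ _ (DWu j s spos) (DWl j s spos)) as Hder.
        pose proof (sign_deriv _ _ _ _ Hder Hd (fun t Ht => proj1 (Hl t Ht)) Z0) as Hsg.
        destruct (Nb (j + 1)%Z) as [_ NQ1].
        { rewrite plus_IZR. lra. }
        unfold DW, DQ in *. fold E in Z0, NQ, NQ1.
        assert (alpha * (Wu j s - Wl j s + E) = 0) by (rewrite Z0; ring).
        assert (beta * (Qu j s - Ql j s + E) >= 0).
        { apply Rle_ge, Rmult_le_pos; lra. }
        assert (beta * (Qu (j+1)%Z s - Ql (j+1)%Z s + E) >= 0).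
        { apply Rle_ge, Rmult_le_pos; lra. }
        assert (Rabs L * E >= 0) by (apply Rle_ge, Rmult_le_pos; [apply Rabs_pos| lra]).
        assert (alpha * E > 0) by (apply Rmult_lt_0_compat; lra).
        replace (eps * (Lam * exp (Lam * s))) with (Lam * E) in Hsg by (unfold E; ring).
        unfold Lam in Hsg. lra.
      + destruct (Req_dec (DQ j s) 0) as [Z0|NZ]; [|lra].
        exfalso.
        pose proof (deriv_comb (Qu j) (Ql j) eps Lam s _ _ (DQu j s spos) (DQl j s spos)) as Hder.
        pose proof (sign_deriv _ _ _ _ Hder Hd (fun t Ht => proj2 (Hl t Ht)) Z0) as Hsg.
        destruct (Nb (j - 1)%Z) as [NW1 _].
        { rewrite minus_IZR. lra. }
        assert (Hr := HN s j ltac:(lra) ltac:(lra)).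
        destruct (HM j Hr s ltac:(lra)) as [B1 B2].
        apply abs_le_inv in B1. apply abs_le_inv in B2.
        specialize (HL (Qu j s) (Ql j s) B1 B2).
        unfold DW, DQ in *. fold E in Z0, NW, NW1.
        assert (Hq : Qu j s - Ql j s = - E) by lra.
        rewrite Hq, Rabs_Ropp, (Rabs_right E) in HL by lra.
        apply abs_le_inv in HL.
        assert (L * E <= Rabs L * E) by (apply Rmult_le_compat_r; [lra| apply Rle_abs]).
        assert (beta * (Qu j s - Ql j s + E) = 0) by (rewrite Z0; ring).
        assert (alpha * (Wu j s - Wl j s + E) >= 0).
        { apply Rle_ge, Rmult_le_pos; lra. }
        assert (alpha * (Wu (j-1)%Z s - Wl (j-1)%Z s + E) >= 0).
        { apply Rle_ge, Rmult_le_pos; lra. }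
        assert (beta * E > 0) by (apply Rmult_lt_0_compat; lra).
        replace (eps * (Lam * exp (Lam * s))) with (Lam * E) in Hsg by (unfold E; ring).
        unfold Lam in Hsg. lra. }
  assert (F3 : Good s).
  { intros j Hj. apply F2. lra. }
  assert (As : A s).
  { split; [lra|]. intros t Ht. destruct (Req_dec t s) as [->|]; auto. apply F1. lra. }
  assert (st : s = t0).
  { destruct (Req_dec s t0) as [|Hne]; auto. exfalso.
    destruct (finite_min (fun j d => forall t, 0 <= t -> Rabs (t - s) < d ->
                 zeta t <= IZR j <= xi t -> DW j t > 0 /\ DQ j t > 0)
                (- N) (Z.to_nat (2 * N))) as [d [Hd Hop]].
    { intros j d d' Hdd H t Ht Hts. apply H; auto. lra. }
    { intros j _.
      destruct (Rlt_dec (zeta s - 1) (IZR j)) as [H1|H1].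
      - destruct (Rlt_dec (IZR j) (xi s + 1)) as [H2|H2].
        + destruct (F2 j ltac:(lra)) as [P1 P2].
          destruct (CDW j s s0 _ P1) as [d1 [Hd1 K1]].
          destruct (CDQ j s s0 _ P2) as [d2 [Hd2 K2]].
          exists (Rmin d1 d2). split. { apply Rmin_pos; auto. }
          intros t Ht Hts _.
          pose proof (Rmin_l d1 d2). pose proof (Rmin_r d1 d2).
          specialize (K1 t Ht ltac:(lra)). specialize (K2 t Ht ltac:(lra)).
          apply abs_lt_inv in K1. apply abs_lt_inv in K2. split; lra.
        + destruct (Cx s s0 1 Rlt_0_1) as [d2 [Hd2 Hx1]].
          exists d2. split; auto. intros t Ht Hts Hj.
          specialize (Hx1 t Ht Hts). apply abs_lt_inv in Hx1. lra.
      - destruct (Cz s s0 1 Rlt_0_1) as [d2 [Hd2 Hz1]].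
        exists d2. split; auto. intros t Ht Hts Hj.
        specialize (Hz1 t Ht Hts). apply abs_lt_inv in Hz1. lra. }
    set (s' := Rmin (s + d / 2) t0).
    assert (As' : A s').
    { assert (s < s') by (unfold s'; apply Rmin_glb_lt; lra).
      assert (s' <= s + d/2) by apply Rmin_l. assert (s' <= t0) by apply Rmin_r.
      split; [lra|]. intros t Ht.
      destruct (Rle_dec t s).
      - apply As. lra.
      - intros j Hj. apply Hop.
        + apply (HN t j); lra.
        + lra.
        + rewrite Rabs_right; lra.
        + auto. }
    specialize (Hub s' As').
    assert (s < s') by (unfold s'; apply Rmin_glb_lt; lra). lra. }
  subst s. destruct As as [_ HA]. apply (HA t0); [lra|]. auto.
Qed.
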